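(* Let $\mathcal M$ be the monoid obtained from the semigroup with zero $\langle a, e \mid ee = e,\ aaa = ae = 0,\ eaa = aa \rangle$ by adjoining an identity element $1$. Then $\mathcal M$ (a monoid of order six) is of type $2^{\aleph_0}$, i.e., the monoid variety generated by $\mathcal M$ has uncountably many subvarieties.
   Context: In the presentation, $0$ denotes the zero element of the presented semigroup; the resulting monoid has the six elements $1, a, e, aa, ea, 0$. Varieties are varieties of monoids (classes closed under homomorphic images, submonoids, and arbitrary direct products). A monoid is of type $2^{\aleph_0}$ if the variety it generates has uncountably many subvarieties. *)

(* Defs.v *)
From Stdlib Require Import FunctionalExtensionality.

Record monoid := Monoid {
  carrier :> Type;
  mop : carrier -> carrier -> carrier;
  mone : carrier;
  massoc : forall x y z, mop x (mop y z) = mop (mop x y) z;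
  mone_l : forall x, mop mone x = x;
  mone_r : forall x, mop x mone = x
}.
Arguments mop {m} _ _.
Arguments mone {m}.

Definition is_hom (A B : monoid) (f : A -> B) : Prop :=
  (forall x y : A, f (mop x y) = mop (f x) (f y)) /\ f mone = mone.

Definition prod_monoid (I : Type) (A : I -> monoid) : monoid.
Proof.
  refine (@Monoid (forall i, A i)
            (fun x y i => mop (x i) (y i)) (fun i => mone) _ _ _).
  - intros x y z; apply functional_extensionality_dep; intro i; apply massoc.
  - intros x; apply functional_extensionality_dep; intro i; apply mone_l.
  - intros x; apply functional_extensionality_dep; intro i; apply mone_r.
Defined.

Definition mclass := monoid -> Prop.

Definition closed_H (K : mclass) : Prop :=
  forall (A B : monoid) (f : A -> B),
    K A -> is_hom A B f -> (forall b : B, exists a : A, f a = b) -> K B.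

Definition closed_S (K : mclass) : Prop :=
  forall (A B : monoid) (f : B -> A),
    K A -> is_hom B A f -> (forall x y : B, f x = f y -> x = y) -> K B.

Definition closed_P (K : mclass) : Prop :=
  forall (I : Type) (A : I -> monoid), (forall i, K (A i)) -> K (prod_monoid I A).

Definition variety (K : mclass) : Prop := closed_H K /\ closed_S K /\ closed_P K.

Definition var_gen (M : monoid) : mclass :=
  fun B => forall K : mclass, variety K -> K M -> K B.

Definition subvariety_of_var (M : monoid) (K : mclass) : Prop :=
  variety K /\ forall B, K B -> var_gen M B.

Definition same_class (K1 K2 : mclass) : Prop := forall B, K1 B <-> K2 B.

(** M is of type 2^aleph0: uncountably many subvarieties of var M,
    i.e. there is no injection of the subvarieties into nat. *)
Definition type_continuum (M : monoid) : Prop :=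
  ~ exists f : mclass -> nat,
      forall K1 K2, subvariety_of_var M K1 -> subvariety_of_var M K2 ->
        f K1 = f K2 -> same_class K1 K2.

Inductive M6 : Type := m1 | ma | me | maa | mea | m0.

Definition m6op (x y : M6) : M6 :=
  match x, y with
  | m1, y => y
  | x, m1 => x
  | m0, _ => m0
  | _, m0 => m0
  | ma, ma => maa
  | ma, _ => m0          (* ae = 0, a.aa = 0, a.ea = aea = 0 *)
  | me, ma => mea
  | me, me => me
  | me, maa => maa       (* eaa = aa *)
  | me, mea => mea       (* e.ea = ea *)
  | maa, _ => m0         (* aaa = 0, aae = 0, aa.aa = 0, aa.ea = 0 *)
  | mea, ma => maa       (* eaa = aa *)
  | mea, _ => m0         (* eae = 0, ea.aa = 0, ea.ea = 0 *)
  end.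

Lemma m6op_assoc : forall x y z, m6op x (m6op y z) = m6op (m6op x y) z.
Proof. intros [] [] []; reflexivity. Qed.
Lemma m6op_1l : forall x, m6op m1 x = x.
Proof. intros []; reflexivity. Qed.
Lemma m6op_1r : forall x, m6op x m1 = x.
Proof. intros []; reflexivity. Qed.

Definition Mcal : monoid := Monoid M6 m6op m1 m6op_assoc m6op_1l m6op_1r.

(* Main.v *)
Require Import Defs.
(* Proof that the six-element monoid Mcal generates a monoid variety
   with uncountably many subvarieties: for J a set of naturals, VJ J is the subvariety
   of var Mcal defined by the identities U_k = V_k (k in J); the Rees quotients
   S(W_m) of the free monoid by the non-factors of suitable isoterms W_m separate them. *)
From Stdlib Require Import List Arith Lia PeanoNat Permutation Bool.
From Stdlib Require Import ProofIrrelevance FunctionalExtensionality ClassicalEpsilon Classical.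
Import ListNotations.


Definition y (p:nat) : nat := 3*p.
Definition q (p:nat) : nat := 3*p+1.
Definition lt_ : nat := 1.
Definition ls_ : nat := 2.
Definition blk (p:nat) : list nat := [y p; y (p-1); q p; q p].
Fixpoint blocks (a k : nat) : list nat :=
  match k with 0 => [] | S k' => blk a ++ blocks (S a) k' end.
Definition ends (m:nat) : list nat := [y (m+3); y (m+2); y (m+4); y (m+3); ls_; y (m+4)].
Definition W (m:nat) : list nat := [y 1; lt_; y 2; y 1] ++ blocks 3 m ++ ends m.

Lemma blocks_length a k : length (blocks a k) = 4*k.
Proof. revert a; induction k; intros; simpl; [lia|]. rewrite IHk. lia. Qed.

Lemma W_length m : length (W m) = 4*m+10.
Proof. unfold W. rewrite !length_app, blocks_length. simpl. lia. Qed.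

Lemma blocks_nth a k i r : i < k -> r < 4 ->
  nth (4*i + r) (blocks a k) 0 = nth r (blk (a+i)) 0.
Proof.
  revert a i; induction k; intros a i Hi Hr; [lia|].
  cbn [blocks]. destruct i.
  - rewrite app_nth1 by (simpl; lia). now replace (a+0) with a by lia.
  - rewrite app_nth2 by (simpl; lia). simpl length.
    replace (4 * S i + r - 4) with (4*i+r) by lia.
    rewrite IHk by lia. now replace (S a + i) with (a + S i) by lia.
Qed.

Lemma W_cases m i : i < 4*m+10 ->
  (i = 0 /\ nth i (W m) 0 = y 1) \/ (i = 1 /\ nth i (W m) 0 = lt_) \/
  (i = 2 /\ nth i (W m) 0 = y 2) \/ (i = 3 /\ nth i (W m) 0 = y 1) \/
  (exists p, 3 <= p <= m+2 /\
     ((i = 4*p-8 /\ nth i (W m) 0 = y p) \/ (i = 4*p-7 /\ nth i (W m) 0 = y (p-1)) \/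
      (i = 4*p-6 /\ nth i (W m) 0 = q p) \/ (i = 4*p-5 /\ nth i (W m) 0 = q p))) \/
  (i = 4*m+4 /\ nth i (W m) 0 = y (m+3)) \/ (i = 4*m+5 /\ nth i (W m) 0 = y (m+2)) \/
  (i = 4*m+6 /\ nth i (W m) 0 = y (m+4)) \/ (i = 4*m+7 /\ nth i (W m) 0 = y (m+3)) \/
  (i = 4*m+8 /\ nth i (W m) 0 = ls_) \/ (i = 4*m+9 /\ nth i (W m) 0 = y (m+4)).
Proof.
  intros Hi. unfold W.
  destruct (Nat.lt_ge_cases i 4) as [H4|H4].
  - rewrite app_nth1 by (simpl; lia).
    destruct i as [|[|[|[|i]]]]; simpl; try lia; tauto.
  - rewrite app_nth2 by (simpl; lia). simpl length.
    destruct (Nat.lt_ge_cases (i-4) (4*m)) as [Hb|Hb].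
    + rewrite app_nth1 by (rewrite blocks_length; lia).
      pose proof (Nat.div_mod_eq (i-4) 4) as Hd.
      pose proof (Nat.mod_upper_bound (i-4) 4 ltac:(lia)) as Hm.
      set (k := (i-4)/4) in *. set (r := (i-4) mod 4) in *.
      assert (Hk : k < m) by lia.
      replace (i-4) with (4*k+r) by lia.
      rewrite blocks_nth by lia.
      do 4 right. left. exists (3+k). split; [lia|].
      unfold blk.
      destruct r as [|[|[|[|r]]]]; simpl; try (exfalso; lia).
      * left. split; [lia|reflexivity].
      * right; left. split; [lia|f_equal; lia].
      * right; right; left. split; [lia|reflexivity].
      * right; right; right. split; [lia|reflexivity].
    + rewrite app_nth2 by (rewrite blocks_length; lia).
      rewrite blocks_length. unfold ends.
      remember (i - 4 - 4*m) as r eqn:Hr.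
      destruct r as [|[|[|[|[|[|r]]]]]]; simpl; try (exfalso; lia).
      * do 5 right; left. split; [lia|reflexivity].
      * do 6 right; left. split; [lia|reflexivity].
      * do 7 right; left. split; [lia|reflexivity].
      * do 8 right; left. split; [lia|reflexivity].
      * do 9 right; left. split; [lia|reflexivity].
      * do 10 right. split; [lia|reflexivity].
Qed.

Definition cc (th : nat -> list nat) (u : list nat) : list nat := concat (map th u).
Definition st (A : list nat) (th : nat -> list nat) (U : list nat) (k : nat) : nat :=
  length A + length (cc th (firstn k U)).

Lemma cc_app th u v : cc th (u ++ v) = cc th u ++ cc th v.
Proof. unfold cc. now rewrite map_app, concat_app. Qed.

Lemma firstn_S_nth (U : list nat) k : k < length U -> firstn (S k) U = firstn k U ++ [nth k U 0].
Proof.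
  revert k; induction U as [|a U IH]; intros k Hk; simpl in *; [lia|].
  destruct k; simpl; [reflexivity|]. rewrite IH by lia. reflexivity.
Qed.

Lemma st_S A th U k : k < length U -> st A th U (S k) = st A th U k + length (th (nth k U 0)).
Proof.
  intros Hk. unfold st. rewrite firstn_S_nth by exact Hk. rewrite cc_app, length_app.
  unfold cc at 2. simpl. rewrite app_nil_r. lia.
Qed.

Lemma split_at (U : list nat) k : k < length U ->
  U = firstn k U ++ nth k U 0 :: skipn (S k) U.
Proof.
  revert k; induction U as [|a U IH]; intros k Hk; simpl in *; [lia|].
  destruct k; simpl; [reflexivity|]. f_equal. apply IH. lia.
Qed.

Lemma cc_cons th a u : cc th (a :: u) = th a ++ cc th u.
Proof. reflexivity. Qed.

Lemma st_val A B th U W k j : W = A ++ cc th U ++ B -> k < length U ->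
  j < length (th (nth k U 0)) ->
  nth (st A th U k + j) W 0 = nth j (th (nth k U 0)) 0.
Proof.
  intros HW Hk Hj. rewrite (split_at U k Hk) in HW.
  rewrite cc_app, cc_cons in HW. rewrite <- !app_assoc in HW.
  subst W. unfold st.
  rewrite app_nth2 by lia.
  replace (length A + length (cc th (firstn k U)) + j - length A)
    with (length (cc th (firstn k U)) + j) by lia.
  rewrite app_nth2 by lia.
  replace (length (cc th (firstn k U)) + j - length (cc th (firstn k U))) with j by lia.
  rewrite app_nth1 by lia. reflexivity.
Qed.

Lemma st_total A B th U W : W = A ++ cc th U ++ B -> st A th U (length U) + length B = length W.
Proof.
  intros HW. unfold st. rewrite firstn_all. rewrite HW, !length_app. lia.
Qed.

Lemma st_mono A th U k k' : k <= k' -> k' <= length U -> st A th U k <= st A th U k'.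
Proof.
  intros H1 H2. induction H1; [lia|].
  rewrite st_S by lia. specialize (IHle ltac:(lia)). lia.
Qed.

Lemma st_lt_len A B th U W k : W = A ++ cc th U ++ B -> k < length U ->
  st A th U k + length (th (nth k U 0)) <= length W.
Proof.
  intros HW Hk. rewrite <- st_S by exact Hk.
  pose proof (st_mono A th U (S k) (length U) ltac:(lia) ltac:(lia)).
  pose proof (st_total A B th U W HW). lia.
Qed.

Lemma len1 (l : list nat) : length l = 1 -> l = [nth 0 l 0].
Proof. destruct l as [|a [|b l]]; simpl; intros; try lia; reflexivity. Qed.

Definition norep2 (W : list nat) := forall i j, i < j -> j + 1 < length W ->
  nth i W 0 = nth j W 0 -> nth (i+1) W 0 = nth (j+1) W 0 -> False.
Definition three (W : list nat) := forall i j k, i < j -> j < k -> k < length W ->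
  nth i W 0 = nth j W 0 -> nth j W 0 = nth k W 0 -> False.

Lemma twovar A B th U W i1 i2 : W = A ++ cc th U ++ B -> norep2 W ->
  i1 < i2 -> i2 < length U -> nth i1 U 0 = nth i2 U 0 -> length (th (nth i1 U 0)) <= 1.
Proof.
  intros HW HN H12 H2 Heq.
  destruct (Nat.le_gt_cases (length (th (nth i1 U 0))) 1) as [|Hl]; [assumption|].
  exfalso.
  pose proof (st_S A th U i1 ltac:(lia)) as S1.
  pose proof (st_mono A th U (S i1) i2 ltac:(lia) ltac:(lia)) as M.
  pose proof (st_lt_len A B th U W i2 HW H2) as L2.
  rewrite <- Heq in L2.
  pose proof (st_val A B th U W i1 0 HW ltac:(lia) ltac:(lia)) as V10.
  pose proof (st_val A B th U W i1 1 HW ltac:(lia) ltac:(lia)) as V11.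
  assert (Hl2 : 1 < length (th (nth i2 U 0))) by (rewrite <- Heq; lia).
  pose proof (st_val A B th U W i2 0 HW ltac:(lia) ltac:(lia)) as V20.
  pose proof (st_val A B th U W i2 1 HW ltac:(lia) ltac:(lia)) as V21.
  rewrite <- Heq in V20, V21. rewrite Nat.add_0_r in V10, V20.
  apply (HN (st A th U i1) (st A th U i2)); [lia|lia| |].
  - now rewrite V10, V20.
  - now rewrite V11, V21.
Qed.

Definition partner m i j := (i = 0 /\ j = 3) \/ (i = 2 /\ j = 5) \/
  (exists p, 3 <= p <= m+2 /\ ((i = 4*p-8 /\ j = 4*p-3) \/ (i = 4*p-6 /\ j = 4*p-5))) \/
  (i = 4*m+4 /\ j = 4*m+7) \/ (i = 4*m+6 /\ j = 4*m+9).

Ltac solve_partner :=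
  first [ exfalso; lia
        | left; lia
        | right; left; lia
        | right; right; right; lia
        | match goal with
          | p : nat |- _ => right; right; left; exists p; lia
          end ].

Lemma pairW m i j : i < j -> j < 4*m+10 -> nth i (W m) 0 = nth j (W m) 0 -> partner m i j.
Proof.
  intros Hij Hj Heq.
  destruct (W_cases m i ltac:(lia)) as
    [[-> Hi]|[[-> Hi]|[[-> Hi]|[[-> Hi]|[[p [Hp [[-> Hi]|[[-> Hi]|[[-> Hi]|[-> Hi]]]]]]|
     [[-> Hi]|[[-> Hi]|[[-> Hi]|[[-> Hi]|[[-> Hi]|[-> Hi]]]]]]]]]]];
  destruct (W_cases m j ltac:(lia)) as
    [[-> Hj']|[[-> Hj']|[[-> Hj']|[[-> Hj']|[[p' [Hp' [[-> Hj']|[[-> Hj']|[[-> Hj']|[-> Hj']]]]]]|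
     [[-> Hj']|[[-> Hj']|[[-> Hj']|[[-> Hj']|[[-> Hj']|[-> Hj']]]]]]]]]]];
  rewrite ?Hi, ?Hj' in Heq; unfold y, q, lt_, ls_ in Heq; unfold partner;
  solve_partner.
Qed.

Ltac wv := match goal with |- nth ?i (W ?m) 0 = _ =>
  let H := fresh in pose proof (W_cases m i ltac:(lia)) as H;
  decompose [or and ex] H; clear H;
  match goal with Hv : nth i (W m) 0 = _ |- _ => rewrite Hv; unfold y, q, lt_, ls_; lia end end.

Lemma Wv_blk m p : 3 <= p <= m+2 ->
  nth (4*p-8) (W m) 0 = y p /\ nth (4*p-7) (W m) 0 = y (p-1) /\
  nth (4*p-6) (W m) 0 = q p /\ nth (4*p-5) (W m) 0 = q p.
Proof. intros Hp. repeat split; wv. Qed.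

Lemma Wv_yL m p : 3 <= p <= m+2 -> nth (4*p-3) (W m) 0 = y p.
Proof. intros Hp. wv. Qed.

Lemma Wv_end m :
  nth (4*m+4) (W m) 0 = y (m+3) /\ nth (4*m+5) (W m) 0 = y (m+2) /\
  nth (4*m+6) (W m) 0 = y (m+4) /\ nth (4*m+7) (W m) 0 = y (m+3) /\
  nth (4*m+8) (W m) 0 = ls_ /\ nth (4*m+9) (W m) 0 = y (m+4).
Proof. repeat split; wv. Qed.

Ltac dpart H := unfold partner in H; decompose [or and ex] H; clear H.

Lemma W_norep2 m : norep2 (W m).
Proof.
  intros i j Hij Hj E1 E2. rewrite W_length in Hj.
  pose proof (pairW m i j Hij ltac:(lia) E1) as P.
  pose proof (pairW m (i+1) (j+1) ltac:(lia) ltac:(lia) E2) as P'.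
  dpart P; dpart P'; lia.
Qed.

Lemma W_three m : three (W m).
Proof.
  intros i j k Hij Hjk Hk E1 E2. rewrite W_length in Hk.
  pose proof (pairW m i j Hij ltac:(lia) E1) as P.
  pose proof (pairW m j k Hjk ltac:(lia) E2) as P'.
  dpart P; dpart P'; lia.
Qed.

Lemma W_nosecsec m a j j' : j < a -> j' < a + 1 -> a + 1 < 4*m+10 ->
  nth j (W m) 0 = nth a (W m) 0 -> nth j' (W m) 0 = nth (a+1) (W m) 0 -> False.
Proof.
  intros H1 H2 H3 E1 E2.
  pose proof (pairW m j a H1 ltac:(lia) E1) as P.
  pose proof (pairW m j' (a+1) H2 ltac:(lia) E2) as P'.
  dpart P; dpart P'; lia.
Qed.

Lemma W_nolatlat m a k k' : a < k -> a + 1 < k' -> k < 4*m+10 -> k' < 4*m+10 ->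
  nth a (W m) 0 = nth k (W m) 0 -> nth (a+1) (W m) 0 = nth k' (W m) 0 -> False.
Proof.
  intros H1 H2 H3 H4 E1 E2.
  pose proof (pairW m a k H1 ltac:(lia) E1) as P.
  pose proof (pairW m (a+1) k' H2 ltac:(lia) E2) as P'.
  dpart P; dpart P'; lia.
Qed.

Lemma st_val0 A B th U W k : W = A ++ cc th U ++ B -> k < length U ->
  th (nth k U 0) = [nth 0 (th (nth k U 0)) 0] ->
  nth (st A th U k) W 0 = nth 0 (th (nth k U 0)) 0.
Proof.
  intros HW Hk H1. rewrite <- (Nat.add_0_r (st A th U k)).
  apply (st_val A B th U W k 0 HW Hk). rewrite H1. simpl. lia.
Qed.

Lemma st_known A B th U W k c : W = A ++ cc th U ++ B -> k < length U ->
  nth k U 0 = c -> th c = [c] -> nth (st A th U k) W 0 = c.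
Proof.
  intros HW Hk Hc Hth. rewrite <- (Nat.add_0_r (st A th U k)).
  rewrite (st_val A B th U W k 0 HW Hk); rewrite Hc, Hth; simpl; auto.
Qed.

Lemma st_in A B th U W k : W = A ++ cc th U ++ B -> k < length U ->
  length (th (nth k U 0)) = 1 -> st A th U k < length W.
Proof. intros HW Hk H. pose proof (st_lt_len A B th U W k HW Hk). lia. Qed.

Lemma stepB A B th U W k c d j0 i2 :
  W = A ++ cc th U ++ B -> norep2 W -> three W ->
  st A th U k = k -> k < i2 -> i2 < length U ->
  nth k U 0 = d -> nth i2 U 0 = d -> nth (k+1) U 0 = c -> th c = [c] ->
  nth (k+1) W 0 = c -> nth j0 W 0 = c -> j0 < k -> nth k W 0 = d -> k+1 < length W ->
  th d = [d] /\ st A th U (k+1) = k+1 /\ st A th U (k+2) = k+2.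
Proof.
  intros HW HN HT Hk Hi2 Hi2U Ud Ud2 Uc Hc Wc Wj0 Hj0 Wd HWl.
  pose proof (twovar A B th U W k i2 HW HN Hi2 Hi2U ltac:(congruence)) as L.
  rewrite Ud in L.
  pose proof (st_S A th U k ltac:(lia)) as S1. rewrite Ud, Hk in S1.
  pose proof (st_S A th U (k+1) ltac:(lia)) as S2. rewrite Uc, Hc in S2. simpl in S2.
  replace (S (k+1)) with (k+2) in S2 by lia. replace (S k) with (k+1) in S1 by lia.
  pose proof (st_known A B th U W (k+1) c HW ltac:(lia) Uc Hc) as K.
  pose proof (st_in A B th U W (k+1) HW ltac:(lia) ltac:(rewrite Uc, Hc; reflexivity)) as In1.
  assert (HL : length (th d) = 0 \/ length (th d) = 1) by lia.
  destruct HL as [E|E]; rewrite E in S1.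
  - exfalso. rewrite S1 in K, In1. rewrite Nat.add_0_r in K, In1.
    apply (HT j0 k (k+1)); try lia; congruence.
  - split; [|lia].
    assert (Hl : th d = [nth 0 (th d) 0]) by (apply len1; exact E).
    pose proof (st_val0 A B th U W k HW ltac:(lia) ltac:(rewrite Ud; exact Hl)) as V.
    rewrite Hk, Ud, Wd in V. rewrite Hl, <- V. reflexivity.
Qed.

Lemma stepC A B th U W k c d e j0 i2 :
  W = A ++ cc th U ++ B -> norep2 W -> three W ->
  st A th U k = k -> k+2 < i2 -> i2 < length U ->
  nth k U 0 = c -> nth (k+1) U 0 = c -> nth (k+2) U 0 = d -> nth i2 U 0 = d ->
  nth (k+3) U 0 = e -> th e = [e] -> nth j0 W 0 = e -> j0 < k -> nth (k+3) W 0 = e ->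
  nth k W 0 = c -> nth (k+2) W 0 = d -> k+3 < length W ->
  th c = [c] /\ th d = [d] /\ st A th U (k+2) = k+2 /\ st A th U (k+4) = k+4.
Proof.
  intros HW HN HT Hk Hi2 Hi2U U0 U1 U2 Ui2 U3 He Wj0 Hj0 W3 W0 W2 HWl.
  pose proof (twovar A B th U W k (k+1) HW HN ltac:(lia) ltac:(lia) ltac:(congruence)) as L1.
  pose proof (twovar A B th U W (k+2) i2 HW HN ltac:(lia) Hi2U ltac:(congruence)) as L2.
  rewrite U0 in L1. rewrite U2 in L2.
  pose proof (st_S A th U k ltac:(lia)) as S1. rewrite U0, Hk in S1.
  pose proof (st_S A th U (k+1) ltac:(lia)) as S2. rewrite U1 in S2.
  pose proof (st_S A th U (k+2) ltac:(lia)) as S3. rewrite U2 in S3.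
  pose proof (st_S A th U (k+3) ltac:(lia)) as S4. rewrite U3, He in S4. simpl in S4.
  replace (S k) with (k+1) in S1 by lia. replace (S (k+1)) with (k+2) in S2 by lia.
  replace (S (k+2)) with (k+3) in S3 by lia. replace (S (k+3)) with (k+4) in S4 by lia.
  pose proof (st_known A B th U W (k+3) e HW ltac:(lia) U3 He) as K.
  pose proof (st_in A B th U W (k+3) HW ltac:(lia) ltac:(rewrite U3, He; reflexivity)) as In1.
  assert (E3 : st A th U (k+3) = k+3).
  { destruct (Nat.eq_dec (st A th U (k+3)) (k+3)) as [|Hne]; [assumption|].
    exfalso. apply (HT j0 (st A th U (k+3)) (k+3)); try lia; congruence. }
  assert (Lc : length (th c) = 1) by lia.
  assert (Ld : length (th d) = 1) by lia.
  assert (Hlc : th c = [nth 0 (th c) 0]) by (apply len1; exact Lc).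
  assert (Hld : th d = [nth 0 (th d) 0]) by (apply len1; exact Ld).
  pose proof (st_val0 A B th U W k HW ltac:(lia) ltac:(rewrite U0; exact Hlc)) as V0.
  pose proof (st_val0 A B th U W (k+2) HW ltac:(lia) ltac:(rewrite U2; exact Hld)) as V2.
  rewrite U0, Hk, W0 in V0. assert (E2 : st A th U (k+2) = k+2) by lia.
  rewrite U2, E2, W2 in V2.
  split; [rewrite Hlc, <- V0; reflexivity|].
  split; [rewrite Hld, <- V2; reflexivity|].
  split; lia.
Qed.

Lemma len_pos (l : list nat) : l <> [] -> 1 <= length l.
Proof. destruct l; simpl; [congruence|lia]. Qed.

Lemma rigid_block n m A B th p :
  W m = A ++ cc th (W n) ++ B ->
  4 <= p -> p <= Nat.min n m + 2 ->
  st A th (W n) (4*p-8) = 4*p-8 -> th (y (p-1)) = [y (p-1)] ->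
  st A th (W n) (4*p-4) = 4*p-4 /\ th (y p) = [y p].
Proof.
  intros HW H4 Hp Hst Hth.
  pose proof (W_length n) as LU. pose proof (W_length m) as LW.
  pose proof (W_norep2 m) as HN. pose proof (W_three m) as HT.
  assert (U0 : nth (4*p-8) (W n) 0 = y p) by wv.
  assert (U1 : nth (4*p-8+1) (W n) 0 = y (p-1)) by wv.
  assert (U5 : nth (4*p-3) (W n) 0 = y p) by wv.
  assert (M0 : nth (4*p-8) (W m) 0 = y p) by wv.
  assert (M1 : nth (4*p-8+1) (W m) 0 = y (p-1)) by wv.
  assert (Mj : nth (4*(p-1)-8) (W m) 0 = y (p-1)) by wv.
  destruct (stepB A B th (W n) (W m) (4*p-8) (y (p-1)) (y p) (4*(p-1)-8) (4*p-3)
              HW HN HT Hst ltac:(lia) ltac:(lia) U0 U5 U1 Hth M1 Mj ltac:(lia) M0 ltac:(lia))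
    as [Hyp [S1 S2]].
  assert (V2 : nth (4*p-8+2) (W n) 0 = q p) by wv.
  assert (V3 : nth (4*p-8+2+1) (W n) 0 = q p) by wv.
  assert (V4 : nth (4*p-8+2+2) (W n) 0 = y (p+1)) by wv.
  assert (V5 : nth (4*p-8+2+3) (W n) 0 = y p) by wv.
  assert (N2 : nth (4*p-8+2) (W m) 0 = q p) by wv.
  assert (N4 : nth (4*p-8+2+2) (W m) 0 = y (p+1)) by wv.
  assert (N5 : nth (4*p-8+2+3) (W m) 0 = y p) by wv.
  assert (Hi2 : exists i2, 4*p-8+2+2 < i2 /\ i2 < length (W n) /\ nth i2 (W n) 0 = y (p+1)).
  { destruct (le_lt_dec (p+1) (n+2)).
    - exists (4*p+1).
      split.
      + lia.
      + split.
        * rewrite LU. lia.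
        * wv.
    - exists (4*p-1).
      split.
      + lia.
      + split.
        * rewrite LU. lia.
        * wv. }
  destruct Hi2 as [i2 [Hi2a [Hi2b Hi2c]]].
  replace (4*p-8+2) with (4*p-8+2) in S2 by lia.
  destruct (stepC A B th (W n) (W m) (4*p-8+2) (q p) (y (p+1)) (y p) (4*p-8) i2
              HW HN HT ltac:(replace (4*p-8+2) with (4*p-8+2) by lia; exact S2)
              Hi2a Hi2b V2 V3 V4 Hi2c V5 Hyp M0 ltac:(lia) N5 N2 N4 ltac:(lia))
    as [_ [_ [S3 _]]].
  split; [|exact Hyp].
  replace (4*p-4) with (4*p-8+2+2) by lia. exact S3.
Qed.

Lemma rigid_init n m A B th : 1 <= n -> 1 <= m ->
  W m = A ++ cc th (W n) ++ B -> th (y 2) <> [] -> th (q 3) <> [] ->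
  st A th (W n) 8 = 8 /\ th (y 3) = [y 3].
Proof.
  intros Hn Hm HW Hy2 Hq3.
  pose proof (W_length n) as LU. pose proof (W_length m) as LW.
  pose proof (W_norep2 m) as HN. pose proof (W_three m) as HT.
  assert (U0 : nth 0 (W n) 0 = y 1) by wv.
  assert (U2 : nth 2 (W n) 0 = y 2) by wv.
  assert (U3 : nth 3 (W n) 0 = y 1) by wv.
  assert (U4 : nth 4 (W n) 0 = y 3) by wv.
  assert (U5 : nth 5 (W n) 0 = y 2) by wv.
  assert (U6 : nth 6 (W n) 0 = q 3) by wv.
  assert (U7 : nth 7 (W n) 0 = q 3) by wv.
  assert (U9 : nth 9 (W n) 0 = y 3) by wv.
  assert (M4 : nth 4 (W m) 0 = y 3) by wv.
  pose proof (twovar A B th (W n) (W m) 2 5 HW HN ltac:(lia) ltac:(lia) ltac:(congruence)) as L2.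
  pose proof (twovar A B th (W n) (W m) 6 7 HW HN ltac:(lia) ltac:(lia) ltac:(congruence)) as L6.
  pose proof (twovar A B th (W n) (W m) 0 3 HW HN ltac:(lia) ltac:(lia) ltac:(congruence)) as L0.
  pose proof (twovar A B th (W n) (W m) 4 9 HW HN ltac:(lia) ltac:(lia) ltac:(congruence)) as L4.
  rewrite U2 in L2. rewrite U6 in L6. rewrite U0 in L0. rewrite U4 in L4.
  pose proof (len_pos _ Hy2). pose proof (len_pos _ Hq3).
  assert (Ly2 : th (y 2) = [nth 0 (th (y 2)) 0]) by (apply len1; lia).
  assert (Lq3 : th (q 3) = [nth 0 (th (q 3)) 0]) by (apply len1; lia).
  pose proof (st_S A th (W n) 2 ltac:(lia)) as S3. rewrite U2 in S3.
  pose proof (st_S A th (W n) 3 ltac:(lia)) as S4. rewrite U3 in S4.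
  pose proof (st_S A th (W n) 4 ltac:(lia)) as S5. rewrite U4 in S5.
  pose proof (st_S A th (W n) 5 ltac:(lia)) as S6. rewrite U5 in S6.
  pose proof (st_S A th (W n) 6 ltac:(lia)) as S7. rewrite U6 in S7.
  pose proof (st_S A th (W n) 7 ltac:(lia)) as S8. rewrite U7 in S8.
  pose proof (st_in A B th (W n) (W m) 7 HW ltac:(lia) ltac:(rewrite U7; lia)) as I7.
  pose proof (st_val0 A B th (W n) (W m) 6 HW ltac:(lia) ltac:(rewrite U6; exact Lq3)) as V6.
  pose proof (st_val0 A B th (W n) (W m) 7 HW ltac:(lia) ltac:(rewrite U7; exact Lq3)) as V7.
  pose proof (st_val0 A B th (W n) (W m) 2 HW ltac:(lia) ltac:(rewrite U2; exact Ly2)) as V2.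
  pose proof (st_val0 A B th (W n) (W m) 5 HW ltac:(lia) ltac:(rewrite U5; exact Ly2)) as V5.
  rewrite U6 in V6. rewrite U7 in V7. rewrite U2 in V2. rewrite U5 in V5.
  pose proof (pairW m (st A th (W n) 6) (st A th (W n) 7) ltac:(lia) ltac:(lia) ltac:(congruence)) as P1.
  pose proof (pairW m (st A th (W n) 2) (st A th (W n) 5) ltac:(lia) ltac:(lia) ltac:(congruence)) as P2.
  assert (E : st A th (W n) 4 = 4 /\ st A th (W n) 8 = 8 /\ length (th (y 3)) = 1).
  { dpart P1; dpart P2; lia. }
  destruct E as [E4 [E8 Ly3]].
  split; [exact E8|].
  assert (Hl : th (y 3) = [nth 0 (th (y 3)) 0]) by (apply len1; exact Ly3).
  pose proof (st_val0 A B th (W n) (W m) 4 HW ltac:(lia) ltac:(rewrite U4; exact Hl)) as V4.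
  rewrite U4, E4, M4 in V4. rewrite Hl, <- V4. reflexivity.
Qed.

Lemma rigid_upto n m A B th : 1 <= n -> 1 <= m ->
  W m = A ++ cc th (W n) ++ B -> th (y 2) <> [] -> th (q 3) <> [] ->
  forall p, 4 <= p -> p <= Nat.min n m + 3 ->
  st A th (W n) (4*p-8) = 4*p-8 /\ th (y (p-1)) = [y (p-1)].
Proof.
  intros Hn Hm HW Hy2 Hq3 p. induction p as [|p IHp]; intros H4 Hp; [lia|].
  destruct (Nat.eq_dec p 3) as [->|Hp3].
  - apply (rigid_init n m A B th Hn Hm HW Hy2 Hq3).
  - destruct (IHp ltac:(lia) ltac:(lia)) as [Hst Hth].
    destruct (rigid_block n m A B th p HW ltac:(lia) ltac:(lia) Hst Hth) as [Sx Hy].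
    replace (4 * S p - 8) with (4*p-4) by lia. replace (S p - 1) with p by lia. auto.
Qed.

Lemma rigidU n m A B th : 1 <= n -> 1 <= m ->
  W m = A ++ cc th (W n) ++ B -> th (y 2) <> [] -> th (q 3) <> [] -> n = m.
Proof.
  intros Hn Hm HW Hy2 Hq3.
  pose proof (W_length n) as LU. pose proof (W_length m) as LW.
  pose proof (W_norep2 m) as HN. pose proof (W_three m) as HT.
  set (mn := Nat.min n m).
  destruct (rigid_upto n m A B th Hn Hm HW Hy2 Hq3 (mn+3) ltac:(lia) ltac:(lia)) as [Hst Hth].
  replace (4*(mn+3)-8) with (4*mn+4) in Hst by lia.
  replace (mn+3-1) with (mn+2) in Hth by lia.
  assert (U0 : nth (4*mn+4) (W n) 0 = y (mn+3)) by (unfold mn in *; wv).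
  assert (U1 : nth (4*mn+4+1) (W n) 0 = y (mn+2)) by (unfold mn in *; wv).
  assert (M0 : nth (4*mn+4) (W m) 0 = y (mn+3)) by (unfold mn in *; wv).
  assert (M1 : nth (4*mn+4+1) (W m) 0 = y (mn+2)) by (unfold mn in *; wv).
  assert (Mj : nth (4*mn) (W m) 0 = y (mn+2)) by (unfold mn in *; wv).
  assert (Hi2 : exists i2, 4*mn+4 < i2 /\ i2 < length (W n) /\ nth i2 (W n) 0 = y (mn+3)).
  { destruct (Nat.eq_dec mn n) as [E|E].
    - exists (4*n+7). split; [lia|]. split; [rewrite LU; lia|]. unfold mn in *. wv.
    - exists (4*mn+9). split; [lia|]. split; [rewrite LU; lia|]. unfold mn in *. wv. }
  destruct Hi2 as [i2 [Ha [Hb Hc]]].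
  destruct (stepB A B th (W n) (W m) (4*mn+4) (y (mn+2)) (y (mn+3)) (4*mn) i2
              HW HN HT Hst Ha Hb U0 Hc U1 Hth M1 Mj ltac:(lia) M0 ltac:(lia))
    as [Hy3 [S1 S2]].
  replace (4*mn+4+2) with (4*mn+6) in S2 by lia.
  destruct (lt_eq_lt_dec n m) as [[Hlt|Heq]|Hgt]; [exfalso| exact Heq | exfalso].
  -
    assert (Emn : mn = n) by (unfold mn; lia). rewrite Emn in *.
    assert (V6 : nth (4*n+6) (W n) 0 = y (n+4)) by wv.
    assert (V7 : nth (4*n+6+1) (W n) 0 = y (n+3)) by wv.
    assert (V9 : nth (4*n+9) (W n) 0 = y (n+4)) by wv.
    assert (N6 : nth (4*n+6) (W m) 0 = q (n+3)) by wv.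
    assert (N7 : nth (4*n+7) (W m) 0 = q (n+3)) by wv.
    pose proof (twovar A B th (W n) (W m) (4*n+6) (4*n+9) HW HN ltac:(lia) ltac:(lia)
                  ltac:(congruence)) as L. rewrite V6 in L.
    pose proof (st_S A th (W n) (4*n+6) ltac:(lia)) as S7. rewrite V6, S2 in S7.
    replace (S (4*n+6)) with (4*n+6+1) in S7 by lia.
    pose proof (st_known A B th (W n) (W m) (4*n+6+1) (y (n+3)) HW ltac:(lia) V7 Hy3) as K.
    rewrite S7 in K.
    assert (HL : length (th (y (n+4))) = 0 \/ length (th (y (n+4))) = 1) by lia.
    destruct HL as [E|E]; rewrite E in K.
    + rewrite Nat.add_0_r, N6 in K. unfold y, q in K. lia.
    + replace (4*n+6+1) with (4*n+7) in K by lia. rewrite N7 in K. unfold y, q in K. lia.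
  -
    assert (Emn : mn = m) by (unfold mn; lia). rewrite Emn in *.
    assert (V6 : nth (4*m+6) (W n) 0 = q (m+3)) by wv.
    assert (V7 : nth (4*m+7) (W n) 0 = q (m+3)) by wv.
    assert (V8 : nth (4*m+8) (W n) 0 = y (m+4)) by wv.
    assert (V9 : nth (4*m+9) (W n) 0 = y (m+3)) by wv.
    assert (N6 : nth (4*m+6) (W m) 0 = y (m+4)) by wv.
    assert (N7 : nth (4*m+7) (W m) 0 = y (m+3)) by wv.
    assert (N8 : nth (4*m+8) (W m) 0 = ls_) by wv.
    assert (N9 : nth (4*m+9) (W m) 0 = y (m+4)) by wv.
    assert (Hj2 : exists j2, 4*m+8 < j2 /\ j2 < length (W n) /\ nth j2 (W n) 0 = y (m+4)).
    { destruct (le_lt_dec (m+4) (n+2)).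
      - exists (4*m+13). split; [lia|]. split; [rewrite LU; lia|]. wv.
      - exists (4*m+11). split; [lia|]. split; [rewrite LU; lia|]. wv. }
    destruct Hj2 as [j2 [Ja [Jb Jc]]].
    pose proof (twovar A B th (W n) (W m) (4*m+6) (4*m+7) HW HN ltac:(lia) ltac:(lia)
                  ltac:(congruence)) as L1. rewrite V6 in L1.
    pose proof (twovar A B th (W n) (W m) (4*m+8) j2 HW HN ltac:(lia) ltac:(lia)
                  ltac:(congruence)) as L2. rewrite V8 in L2.
    pose proof (st_S A th (W n) (4*m+6) ltac:(lia)) as T7. rewrite V6, S2 in T7.
    pose proof (st_S A th (W n) (4*m+7) ltac:(lia)) as T8. rewrite V7 in T8.
    pose proof (st_S A th (W n) (4*m+8) ltac:(lia)) as T9. rewrite V8 in T9.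
    pose proof (st_S A th (W n) (4*m+9) ltac:(lia)) as T10. rewrite V9, Hy3 in T10.
    simpl length in T10.
    replace (S (4*m+6)) with (4*m+7) in T7 by lia.
    replace (S (4*m+7)) with (4*m+8) in T8 by lia.
    replace (S (4*m+8)) with (4*m+9) in T9 by lia.
    replace (S (4*m+9)) with (4*m+10) in T10 by lia.
    pose proof (st_known A B th (W n) (W m) (4*m+9) (y (m+3)) HW ltac:(lia) V9 Hy3) as K.
    assert (E : length (th (q (m+3))) = 0 /\ length (th (y (m+4))) = 1).
    { assert (HL1 : length (th (q (m+3))) = 0 \/ length (th (q (m+3))) = 1) by lia.
      assert (HL2 : length (th (y (m+4))) = 0 \/ length (th (y (m+4))) = 1) by lia.
      destruct HL1 as [E1|E1]; destruct HL2 as [E2|E2]; rewrite E1 in T7, T8; rewrite E2 in T9;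
        rewrite T9, T8, T7 in K; try (split; assumption);
        [ replace (4*m+6+0+0+0) with (4*m+6) in K by lia; rewrite N6 in K
        | replace (4*m+6+1+1+0) with (4*m+8) in K by lia; rewrite N8 in K
        | replace (4*m+6+1+1+1) with (4*m+9) in K by lia; rewrite N9 in K ];
        unfold y, ls_ in K; lia. }
    destruct E as [E1 E2].
    assert (Hl : th (y (m+4)) = [nth 0 (th (y (m+4))) 0]) by (apply len1; exact E2).
    pose proof (st_val0 A B th (W n) (W m) (4*m+8) HW ltac:(lia) ltac:(rewrite V8; exact Hl)) as V.
    rewrite V8 in V. rewrite T8, T7, E1 in V. replace (4*m+6+0+0) with (4*m+6) in V by lia.
    rewrite N6 in V. rewrite <- V in Hl. clear V.
    rewrite E1 in T7, T8. rewrite E2 in T9.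
    assert (S10 : st A th (W n) (4*m+10) = 4*m+8) by lia.
    destruct (le_lt_dec (m+4) (n+2)) as [Hle|Hgt2].
    +
      assert (W10 : nth (4*m+10) (W n) 0 = q (m+4)) by wv.
      assert (W11 : nth (4*m+11) (W n) 0 = q (m+4)) by wv.
      assert (W12 : nth (4*m+12) (W n) 0 = y (m+5)) by wv.
      assert (W13 : nth (4*m+13) (W n) 0 = y (m+4)) by wv.
      assert (Hk2 : exists k2, 4*m+13 < k2 /\ k2 < length (W n) /\ nth k2 (W n) 0 = y (m+5)).
      { destruct (le_lt_dec (m+5) (n+2)).
        - exists (4*m+17). split; [lia|]. split; [rewrite LU; lia|]. wv.
        - exists (4*m+15). split; [lia|]. split; [rewrite LU; lia|]. wv. }
      destruct Hk2 as [k2 [Ka [Kb Kc]]].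
      pose proof (twovar A B th (W n) (W m) (4*m+10) (4*m+11) HW HN ltac:(lia) ltac:(lia)
                    ltac:(congruence)) as L3. rewrite W10 in L3.
      pose proof (twovar A B th (W n) (W m) (4*m+12) k2 HW HN ltac:(lia) ltac:(lia)
                    ltac:(congruence)) as L4. rewrite W12 in L4.
      pose proof (st_S A th (W n) (4*m+10) ltac:(lia)) as R1. rewrite W10, S10 in R1.
      pose proof (st_S A th (W n) (4*m+11) ltac:(lia)) as R2. rewrite W11 in R2.
      pose proof (st_S A th (W n) (4*m+12) ltac:(lia)) as R3. rewrite W12 in R3.
      replace (S (4*m+10)) with (4*m+11) in R1 by lia.
      replace (S (4*m+11)) with (4*m+12) in R2 by lia.
      replace (S (4*m+12)) with (4*m+13) in R3 by lia.
      pose proof (st_known A B th (W n) (W m) (4*m+13) (y (m+4)) HW ltac:(lia) W13 Hl) as K2.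
      pose proof (st_in A B th (W n) (W m) (4*m+13) HW ltac:(lia) ltac:(rewrite W13, Hl; reflexivity)) as I13.
      assert (E3 : length (th (q (m+4))) = 0 /\ length (th (y (m+5))) = 1).
      { assert (HL1 : length (th (q (m+4))) = 0 \/ length (th (q (m+4))) = 1) by lia.
        assert (HL2 : length (th (y (m+5))) = 0 \/ length (th (y (m+5))) = 1) by lia.
        destruct HL1 as [E3|E3]; destruct HL2 as [E4|E4]; rewrite E3 in R1, R2; rewrite E4 in R3;
          rewrite R3, R2, R1 in K2, I13; try (split; assumption); try lia.
        replace (4*m+8+0+0+0) with (4*m+8) in K2 by lia. rewrite N8 in K2.
        unfold y, ls_ in K2. lia. }
      destruct E3 as [E3 E4].
      assert (Hl5 : th (y (m+5)) = [nth 0 (th (y (m+5))) 0]) by (apply len1; exact E4).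
      pose proof (st_val0 A B th (W n) (W m) (4*m+12) HW ltac:(lia) ltac:(rewrite W12; exact Hl5)) as V12.
      rewrite W12, R2, R1, E3 in V12. replace (4*m+8+0+0) with (4*m+8) in V12 by lia.
      rewrite N8 in V12.
      pose proof (st_val0 A B th (W n) (W m) k2 HW ltac:(lia) ltac:(rewrite Kc; exact Hl5)) as Vk.
      rewrite Kc, <- V12 in Vk.
      pose proof (st_mono A th (W n) (4*m+13) k2 ltac:(lia) ltac:(lia)) as Mo.
      pose proof (st_in A B th (W n) (W m) k2 HW ltac:(lia) ltac:(rewrite Kc; exact E4)) as Ik.
      rewrite E3 in R1, R2. rewrite E4 in R3.
      assert (Ek : st A th (W n) k2 = 4*m+9) by lia.
      rewrite Ek, N9 in Vk. unfold y, ls_ in Vk. lia.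
    +
      assert (W10 : nth (4*m+10) (W n) 0 = y (m+5)) by wv.
      assert (W11 : nth (4*m+11) (W n) 0 = y (m+4)) by wv.
      assert (W13 : nth (4*m+13) (W n) 0 = y (m+5)) by wv.
      pose proof (twovar A B th (W n) (W m) (4*m+10) (4*m+13) HW HN ltac:(lia) ltac:(lia)
                    ltac:(congruence)) as L3. rewrite W10 in L3.
      pose proof (st_S A th (W n) (4*m+10) ltac:(lia)) as R1. rewrite W10, S10 in R1.
      pose proof (st_S A th (W n) (4*m+11) ltac:(lia)) as R2. rewrite W11, Hl in R2.
      simpl length in R2.
      replace (S (4*m+10)) with (4*m+11) in R1 by lia.
      replace (S (4*m+11)) with (4*m+12) in R2 by lia.
      pose proof (st_known A B th (W n) (W m) (4*m+11) (y (m+4)) HW ltac:(lia) W11 Hl) as K2.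
      assert (E3 : length (th (y (m+5))) = 1).
      { assert (HL1 : length (th (y (m+5))) = 0 \/ length (th (y (m+5))) = 1) by lia.
        destruct HL1 as [E3|E3]; [|exact E3]. rewrite E3 in R1. rewrite R1 in K2.
        replace (4*m+8+0) with (4*m+8) in K2 by lia. rewrite N8 in K2. unfold y, ls_ in K2. lia. }
      pose proof (st_in A B th (W n) (W m) (4*m+13) HW ltac:(lia) ltac:(rewrite W13; exact E3)) as I13.
      pose proof (st_mono A th (W n) (4*m+12) (4*m+13) ltac:(lia) ltac:(lia)) as Mo.
      rewrite E3 in R1. lia.
Qed.

Definition pre8 := [y 1; lt_; y 2; y 1; y 3; y 2; q 3; q 3].
Definition preV := [y 1; lt_; y 2; y 1; y 3; q 3; y 2; q 3].
Definition Uw (k : nat) : list nat := pre8 ++ blocks 4 k ++ ends (S k).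
Definition Vw (k : nat) : list nat := preV ++ blocks 4 k ++ ends (S k).

Lemma Uw_W k : Uw k = W (S k).
Proof. reflexivity. Qed.

Lemma rigidV k m A B th : W m = A ++ cc th (Vw k) ++ B -> th (y 2) <> [] -> th (q 3) <> [] -> False.
Proof.
  intros HW Hy2 Hq3.
  pose proof (W_length m) as LW. pose proof (W_norep2 m) as HN.
  assert (LV : 8 <= length (Vw k)) by (unfold Vw; rewrite !length_app; simpl; lia).
  assert (V2 : nth 2 (Vw k) 0 = y 2) by reflexivity.
  assert (V5 : nth 5 (Vw k) 0 = q 3) by reflexivity.
  assert (V6 : nth 6 (Vw k) 0 = y 2) by reflexivity.
  assert (V7 : nth 7 (Vw k) 0 = q 3) by reflexivity.
  pose proof (twovar A B th (Vw k) (W m) 2 6 HW HN ltac:(lia) ltac:(lia) ltac:(congruence)) as L2.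
  pose proof (twovar A B th (Vw k) (W m) 5 7 HW HN ltac:(lia) ltac:(lia) ltac:(congruence)) as L5.
  rewrite V2 in L2. rewrite V5 in L5.
  pose proof (len_pos _ Hy2). pose proof (len_pos _ Hq3).
  assert (Lq3 : th (q 3) = [nth 0 (th (q 3)) 0]) by (apply len1; lia).
  pose proof (st_S A th (Vw k) 5 ltac:(lia)) as S6. rewrite V5 in S6.
  pose proof (st_S A th (Vw k) 6 ltac:(lia)) as S7. rewrite V6 in S7.
  pose proof (st_in A B th (Vw k) (W m) 7 HW ltac:(lia) ltac:(rewrite V7; lia)) as I7.
  pose proof (st_val0 A B th (Vw k) (W m) 5 HW ltac:(lia) ltac:(rewrite V5; exact Lq3)) as X5.
  pose proof (st_val0 A B th (Vw k) (W m) 7 HW ltac:(lia) ltac:(rewrite V7; exact Lq3)) as X7.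
  rewrite V5 in X5. rewrite V7 in X7.
  pose proof (pairW m (st A th (Vw k) 5) (st A th (Vw k) 7) ltac:(lia) ltac:(lia) ltac:(congruence)) as P.
  dpart P; lia.
Qed.

Lemma UV_swap th k : th (y 2) = [] \/ th (q 3) = [] -> cc th (Uw k) = cc th (Vw k).
Proof.
  intros H. unfold Uw, Vw. rewrite !cc_app. f_equal.
  unfold pre8, preV, cc; simpl. destruct H as [H|H]; rewrite H; simpl; rewrite ?app_nil_r; reflexivity.
Qed.

Definition cnt (x : nat) (w : list nat) : nat := count_occ Nat.eq_dec w x.
Definition sec (w : list nat) i := exists j, j < i /\ nth j w 0 = nth i w 0.
Definition lat (w : list nat) i := exists j, i < j /\ j < length w /\ nth j w 0 = nth i w 0.
Definition Rr (w : list nat) x z := exists a b, a < b /\ b < length w /\ nth a w 0 = x /\ nth b w 0 = z.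
Definition P1 (u : list nat) := forall i, i+1 < length u -> lat u i -> ~ sec u i -> lat u (i+1) -> sec u (i+1).
Definition P2 (u : list nat) := forall i, i+1 < length u -> sec u i -> sec u (i+1) -> False.

Lemma pos_in (w : list nat) x : In x w <-> exists a, a < length w /\ nth a w 0 = x.
Proof.
  split.
  - intros H. destruct (In_nth w x 0 H) as [a [Ha Hb]]. eauto.
  - intros [a [Ha Hb]]. subst. apply nth_In. exact Ha.
Qed.

Lemma cnt_pos (w : list nat) x : 0 < cnt x w <-> exists a, a < length w /\ nth a w 0 = x.
Proof. unfold cnt. rewrite <- pos_in. rewrite (count_occ_In Nat.eq_dec). split; intro; lia. Qed.

Lemma pos_firstn (w : list nat) i x : i <= length w ->
  (0 < cnt x (firstn i w) <-> exists a, a < i /\ nth a w 0 = x).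
Proof.
  intros Hi. rewrite cnt_pos. rewrite length_firstn.
  split; intros [a [Ha Hb]]; exists a; rewrite nth_firstn in *;
    destruct (Nat.ltb_spec a i); split; try lia; auto.
Qed.

Lemma pos_skipn (w : list nat) i x :
  0 < cnt x (skipn i w) <-> exists a, i <= a /\ a < length w /\ nth a w 0 = x.
Proof.
  rewrite cnt_pos. rewrite length_skipn. split.
  - intros [a [Ha Hb]]. exists (i+a). rewrite nth_skipn in Hb. split; [lia|split; [lia|auto]].
  - intros [a [Ha [Hb Hc]]]. exists (a - i). rewrite nth_skipn.
    replace (i + (a - i)) with a by lia. split; [lia|auto].
Qed.

Lemma cnt_split (w : list nat) i x : i < length w ->
  cnt x w = cnt x (firstn i w) + (if Nat.eq_dec (nth i w 0) x then 1 else 0) + cnt x (skipn (S i) w).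
Proof.
  intros Hi. unfold cnt at 1. rewrite (split_at w i Hi) at 1.
  rewrite count_occ_app. simpl. unfold cnt. destruct (Nat.eq_dec (nth i w 0) x); lia.
Qed.

Lemma skipn_nth_cons (w : list nat) k : k < length w -> skipn k w = nth k w 0 :: skipn (S k) w.
Proof. revert k; induction w; intros [|k] H; simpl in *; try lia; auto. apply IHw; lia. Qed.

Lemma iso_comb u v : (forall x, cnt x u <= 2) -> P1 u -> P2 u ->
  (forall x, cnt x v = cnt x u) -> (forall x z, x <> z -> (Rr u x z <-> Rr v x z)) -> u = v.
Proof.
  intros Hc2 HP1 HP2 Hcnt HR.
  assert (Hlen : length u = length v).
  { apply Permutation_length. apply (Permutation_count_occ Nat.eq_dec).
    intros x. symmetry. apply Hcnt. }
  assert (Hpt : forall i, i < length u -> (forall j, j < i -> nth j u 0 = nth j v 0) ->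
                 nth i u 0 = nth i v 0).
  { intros i Hi Hpre.
    destruct (Nat.eq_dec (nth i u 0) (nth i v 0)) as [|Hbc]; [assumption|exfalso].
    set (b := nth i u 0) in *. set (c := nth i v 0) in *.
    assert (Hp : firstn i v = firstn i u).
    { apply nth_ext with (d := 0) (d' := 0).
      - rewrite !length_firstn. lia.
      - intros j Hj. rewrite length_firstn in Hj. rewrite !nth_firstn.
        destruct (Nat.ltb_spec j i); [|lia]. symmetry. apply Hpre. lia. }
    set (p := firstn i u) in *.
    assert (Eu : forall x, cnt x u = cnt x p + (if Nat.eq_dec b x then 1 else 0) + cnt x (skipn (S i) u))
      by (intros; apply cnt_split; lia).
    assert (Ev : forall x, cnt x v = cnt x p + (if Nat.eq_dec c x then 1 else 0) + cnt x (skipn (S i) v))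
      by (intros; rewrite <- Hp; apply cnt_split; lia).
    assert (Pu : forall x, 0 < cnt x p <-> exists a, a < i /\ nth a u 0 = x)
      by (intros; apply pos_firstn; lia).
    assert (Pv : forall x, 0 < cnt x p <-> exists a, a < i /\ nth a v 0 = x)
      by (intros; rewrite <- Hp; apply pos_firstn; lia).
    assert (Au : forall x, 0 < cnt x (skipn (S i) u) <-> exists a, i < a /\ a < length u /\ nth a u 0 = x)
      by (intros; rewrite pos_skipn; split; intros [a Ha]; exists a; lia).
    assert (Av : forall x, 0 < cnt x (skipn (S i) v) <-> exists a, i < a /\ a < length v /\ nth a v 0 = x)
      by (intros; rewrite pos_skipn; split; intros [a Ha]; exists a; lia).
    assert (Locu : forall x a, a < length u -> nth a u 0 = x ->
               (a < i /\ 0 < cnt x p) \/ (a = i /\ b = x) \/ (i < a /\ 0 < cnt x (skipn (S i) u))).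
    { intros x a Ha Hx. destruct (lt_eq_lt_dec a i) as [[H|H]|H].
      - left. split; [lia|]. apply Pu. eauto.
      - right; left. subst a. split; auto.
      - right; right. split; [lia|]. apply Au. eauto. }
    assert (Locv : forall x a, a < length v -> nth a v 0 = x ->
               (a < i /\ 0 < cnt x p) \/ (a = i /\ c = x) \/ (i < a /\ 0 < cnt x (skipn (S i) v))).
    { intros x a Ha Hx. destruct (lt_eq_lt_dec a i) as [[H|H]|H].
      - left. split; [lia|]. apply Pv. eauto.
      - right; left. subst a. split; auto.
      - right; right. split; [lia|]. apply Av. eauto. }
    pose proof (Eu b) as Eub. pose proof (Ev b) as Evb. pose proof (Eu c) as Euc. pose proof (Ev c) as Evc.
    pose proof (Hcnt b) as Hcb. pose proof (Hcnt c) as Hcc. pose proof (Hc2 b) as H2b. pose proof (Hc2 c) as H2c.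
    destruct (Nat.eq_dec b b) as [_|]; [|congruence].
    destruct (Nat.eq_dec c c) as [_|]; [|congruence].
    destruct (Nat.eq_dec b c) as [|_]; [congruence|].
    destruct (Nat.eq_dec c b) as [|_]; [congruence|].
    destruct (Nat.eq_dec (cnt c p) 0) as [Hcp0|Hcp].
    -
      destruct (Nat.eq_dec (cnt b p) 0) as [Hbp0|Hbp].
      + destruct (Nat.eq_dec (cnt b (skipn (S i) u)) 0) as [HbU0|HbU].
        *
          assert (HV : 0 < cnt b (skipn (S i) v)) by lia.
          apply Av in HV. destruct HV as [a' [Ha'1 [Ha'2 Ha'3]]].
          assert (Rv : Rr v c b) by (exists i, a'; repeat split; auto; lia).
          apply (HR c b ltac:(congruence)) in Rv. destruct Rv as [a [a2 [Ha [Ha2 [Hx Hz]]]]].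
          destruct (Locu c a ltac:(lia) Hx) as [[? ?]|[[? ?]|[? ?]]]; try lia; try congruence.
          destruct (Locu b a2 ltac:(lia) Hz) as [[? ?]|[[? ?]|[? ?]]]; lia.
        *
          assert (Hlat : lat u i).
          { assert (HU : 0 < cnt b (skipn (S i) u)) by lia. apply Au in HU.
            destruct HU as [a [? [? ?]]]. exists a. repeat split; auto. }
          assert (Hnsec : ~ sec u i).
          { intros [j [Hj1 Hj2]]. assert (0 < cnt b p) by (apply Pu; eauto). lia. }
          assert (Hi1 : i + 1 < length u) by (destruct Hlat as [a [? [? ?]]]; lia).
          set (d := nth (i+1) u 0) in *.
          assert (NoLat : ~ lat u (i+1)).
          { intros Hl. pose proof (HP1 i Hi1 Hlat Hnsec Hl) as Hs.
            destruct Hl as [j' [Hj'1 [Hj'2 Hj'3]]]. destruct Hs as [j [Hj1 Hj2]].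
            pose proof (cnt_split u (i+1) d ltac:(lia)) as Cd.
            destruct (Nat.eq_dec (nth (i+1) u 0) d) as [_|Hn]; [|exfalso; apply Hn; reflexivity].
            assert (0 < cnt d (firstn (i+1) u)) by (apply pos_firstn; [lia|]; eauto).
            assert (0 < cnt d (skipn (S (i+1)) u)) by (apply pos_skipn; exists j'; repeat split; auto; lia).
            pose proof (Hc2 d). lia. }
          destruct (Nat.eq_dec d c) as [Hdc|Hdc].
          -- assert (Ru : Rr u b c) by (exists i, (i+1); repeat split; auto; lia).
             apply (HR b c ltac:(congruence)) in Ru. destruct Ru as [a [a2 [Ha [Ha2 [Hx Hz]]]]].
             destruct (Locv b a ltac:(lia) Hx) as [[? ?]|[[? ?]|[? ?]]]; try lia; try congruence.
             destruct (Locv c a2 ltac:(lia) Hz) as [[? ?]|[[? ?]|[? ?]]]; try lia.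
             assert (Cu : cnt c (skipn (S i) u) = 1).
             { assert (Hs : skipn (S i) u = d :: skipn (S (i+1)) u).
               { replace (S i) with (i+1) by lia. apply skipn_nth_cons. lia. }
               rewrite Hs. unfold cnt. cbn [count_occ]. destruct (Nat.eq_dec d c) as [_|]; [|congruence].
               assert (cnt c (skipn (S (i+1)) u) = 0); [|unfold cnt in *; lia].
               destruct (Nat.eq_dec (cnt c (skipn (S (i+1)) u)) 0) as [|Hne]; [assumption|].
               exfalso. apply NoLat. assert (HH : 0 < cnt c (skipn (S (i+1)) u)) by lia.
               apply pos_skipn in HH. destruct HH as [j [? [? ?]]]. exists j. repeat split; try lia; congruence. }
             lia.
          -- assert (HVd : 0 < cnt d (skipn (S i) v)).
             { pose proof (Eu d) as Eud. pose proof (Ev d) as Evd. pose proof (Hcnt d).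
               destruct (Nat.eq_dec c d) as [|_]; [congruence|].
               assert (0 < cnt d (skipn (S i) u)) by (apply Au; exists (i+1); repeat split; auto; lia).
               destruct (Nat.eq_dec b d); lia. }
             apply Av in HVd. destruct HVd as [a' [Ha'1 [Ha'2 Ha'3]]].
             assert (Rv : Rr v c d) by (exists i, a'; repeat split; auto; lia).
             apply (HR c d ltac:(congruence)) in Rv. destruct Rv as [a [a2 [Ha [Ha2 [Hx Hz]]]]].
             destruct (Locu c a ltac:(lia) Hx) as [[? ?]|[[? ?]|[? ?]]]; try lia; try congruence.
             assert (a <> i+1) by (intros ->; apply Hdc; exact Hx).
             apply NoLat. exists a2. repeat split; auto; lia.
      +
        assert (HV : 0 < cnt b (skipn (S i) v)) by lia.
        apply Av in HV. destruct HV as [a' [Ha'1 [Ha'2 Ha'3]]].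
        assert (Rv : Rr v c b) by (exists i, a'; repeat split; auto; lia).
        apply (HR c b ltac:(congruence)) in Rv. destruct Rv as [a [a2 [Ha [Ha2 [Hx Hz]]]]].
        destruct (Locu c a ltac:(lia) Hx) as [[? ?]|[[? ?]|[? ?]]]; try lia; try congruence.
        destruct (Locu b a2 ltac:(lia) Hz) as [[? ?]|[[? ?]|[? ?]]]; lia.
    -
      assert (HcU : 0 < cnt c (skipn (S i) u)) by lia.
      apply Au in HcU. destruct HcU as [a'' [Ha''1 [Ha''2 Ha''3]]].
      assert (HcV : cnt c (skipn (S i) v) = 0) by lia.
      destruct (Nat.eq_dec (cnt b p) 0) as [Hbp0|Hbp].
      + assert (Ru : Rr u b c) by (exists i, a''; repeat split; auto; lia).
        apply (HR b c ltac:(congruence)) in Ru. destruct Ru as [a [a2 [Ha [Ha2 [Hx Hz]]]]].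
        destruct (Locv b a ltac:(lia) Hx) as [[? ?]|[[? ?]|[? ?]]]; try lia; try congruence.
        destruct (Locv c a2 ltac:(lia) Hz) as [[? ?]|[[? ?]|[? ?]]]; lia.
      + assert (Hsec : sec u i).
        { assert (HH : 0 < cnt b p) by lia. apply Pu in HH. destruct HH as [j [? ?]]. exists j. auto. }
        assert (Hi1 : i + 1 < length u) by lia.
        set (e := nth (i+1) u 0) in *.
        assert (Hns : ~ sec u (i+1)) by (intros Hs; exact (HP2 i Hi1 Hsec Hs)).
        assert (He1 : cnt e p = 0).
        { destruct (Nat.eq_dec (cnt e p) 0) as [|Hne]; [assumption|].
          exfalso. assert (HH : 0 < cnt e p) by lia. apply Pu in HH. destruct HH as [j [? ?]].
          apply Hns. exists j. split; [lia|auto]. }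
        assert (Heb : e <> b) by (intros Heb; apply Hns; exists i; split; [lia|auto]).
        assert (Hec : e <> c) by (intros ->; lia).
        assert (a'' <> i+1) by (intros ->; apply Hec; exact Ha''3).
        assert (Ru : Rr u e c) by (exists (i+1), a''; repeat split; auto; lia).
        apply (HR e c Hec) in Ru. destruct Ru as [a [a2 [Ha [Ha2 [Hx Hz]]]]].
        destruct (Locv e a ltac:(lia) Hx) as [[? ?]|[[? ?]|[? ?]]]; try lia; try congruence.
        destruct (Locv c a2 ltac:(lia) Hz) as [[? ?]|[[? ?]|[? ?]]]; lia. }
  apply nth_ext with (d := 0) (d' := 0); [exact Hlen|].
  intros i. induction i as [i IH] using (well_founded_induction lt_wf).
  intros Hi. apply Hpt; [exact Hi|]. intros j Hj. apply IH; lia.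
Qed.


Definition evalw (B : monoid) (phi : nat -> B) (w : list nat) : B :=
  fold_right (fun x acc => mop (phi x) acc) mone w.

Lemma evalw_app (B : monoid) phi u v : evalw B phi (u ++ v) = mop (evalw B phi u) (evalw B phi v).
Proof.
  induction u as [|a u IH]; simpl.
  - symmetry. apply mone_l.
  - rewrite IH. apply massoc.
Qed.

Lemma evalw_cons (B : monoid) phi a w : evalw B phi (a :: w) = mop (phi a) (evalw B phi w).
Proof. reflexivity. Qed.

Definition powa (k : nat) : M6 := match k with 0 => m1 | 1 => ma | 2 => maa | _ => m0 end.
Definition phx (x : nat) : nat -> Mcal := fun z => if Nat.eq_dec z x then ma else m1.

Lemma ev_phx x w : evalw Mcal (phx x) w = powa (cnt x w).
Proof.
  induction w as [|a w IH]; [reflexivity|].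
  rewrite evalw_cons, IH. change (@mop Mcal) with m6op. unfold phx, cnt. simpl.
  destruct (Nat.eq_dec a x); [|destruct (count_occ Nat.eq_dec w x); reflexivity].
  destruct (count_occ Nat.eq_dec w x) as [|[|[|k]]]; reflexivity.
Qed.

Fixpoint inb (z : nat) (w : list nat) : bool :=
  match w with [] => false | a :: w' => if Nat.eq_dec a z then true else inb z w' end.
Fixpoint Rb (x z : nat) (w : list nat) : bool :=
  match w with [] => false | a :: w' => (if Nat.eq_dec a x then inb z w' else false) || Rb x z w' end.
Definition fv (c : nat) (r e : bool) : M6 :=
  if r then m0 else match c with 0 => if e then me else m1 | 1 => if e then mea else ma | 2 => maa | _ => m0 end.
Definition phxz (x z : nat) : nat -> Mcal :=
  fun a => if Nat.eq_dec a x then ma else if Nat.eq_dec a z then me else m1.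

Lemma ev_phxz x z w : x <> z -> evalw Mcal (phxz x z) w = fv (cnt x w) (Rb x z w) (inb z w).
Proof.
  intros Hxz. induction w as [|a w IH]; [reflexivity|].
  rewrite evalw_cons, IH. change (@mop Mcal) with m6op. unfold phxz, cnt. simpl.
  repeat (destruct (Nat.eq_dec _ _); subst; try congruence); simpl;
    destruct (Rb x z w), (inb z w), (count_occ Nat.eq_dec w x) as [|[|[|k]]]; reflexivity.
Qed.

Lemma inb_spec z w : inb z w = true <-> In z w.
Proof.
  induction w as [|a w IH]; simpl; [split; [discriminate|tauto]|].
  destruct (Nat.eq_dec a z); split; intros H; auto.
  - right. apply IH. auto.
  - destruct H; [congruence|]. apply IH; auto.
Qed.

Lemma Rr_cons a w x z : Rr (a :: w) x z <-> (a = x /\ In z w) \/ Rr w x z.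
Proof.
  unfold Rr. split.
  - intros [i [j [Hij [Hj [Hi Hz]]]]]. simpl in Hj.
    destruct i as [|i]; destruct j as [|j]; try lia; simpl in Hi, Hz.
    + left. split; [auto|]. subst. apply nth_In. lia.
    + right. exists i, j. repeat split; auto; lia.
  - intros [[Ha Hz]|[i [j [Hij [Hj [Hi Hz]]]]]].
    + apply pos_in in Hz. destruct Hz as [b [Hb Hbz]]. exists 0, (S b). simpl. repeat split; auto; lia.
    + exists (S i), (S j). simpl. repeat split; auto; lia.
Qed.

Lemma Rb_spec x z w : Rb x z w = true <-> Rr w x z.
Proof.
  induction w as [|a w IH]; simpl.
  - split; [discriminate|]. intros [i [j [_ [Hj _]]]]. simpl in Hj. lia.
  - rewrite Rr_cons, orb_true_iff, <- IH. destruct (Nat.eq_dec a x).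
    + rewrite inb_spec. tauto.
    + split; [intros [H|H]; [discriminate|auto]|]. intros [[? ?]|H]; [congruence|auto].
Qed.

Lemma Rb_cnt x z w : Rb x z w = true -> 0 < cnt x w.
Proof.
  intros H. apply Rb_spec in H. destruct H as [i [j [Hij [Hj [Hi Hz]]]]].
  apply cnt_pos. exists i. split; [lia|auto].
Qed.

Lemma data u v : (forall phi : nat -> Mcal, evalw Mcal phi u = evalw Mcal phi v) ->
  (forall x, cnt x u <= 2) ->
  (forall x, cnt x v = cnt x u) /\ (forall x z, x <> z -> (Rr u x z <-> Rr v x z)).
Proof.
  intros Hev H2.
  assert (Hc : forall x, cnt x v = cnt x u).
  { intros x. pose proof (Hev (phx x)) as E. rewrite !ev_phx in E. specialize (H2 x).
    destruct (cnt x u) as [|[|[|k]]]; destruct (cnt x v) as [|[|[|k']]]; simpl in E;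
      try discriminate; try lia. }
  split; [exact Hc|].
  intros x z Hxz. pose proof (Hev (phxz x z)) as E. rewrite !ev_phxz in E by exact Hxz.
  rewrite Hc in E. rewrite <- !Rb_spec.
  pose proof (H2 x). pose proof (Rb_cnt x z u). pose proof (Rb_cnt x z v). rewrite Hc in *.
  destruct (cnt x u) as [|[|[|k]]]; [| | |lia];
  destruct (Rb x z u), (Rb x z v), (inb z u), (inb z v); simpl in E;
    try discriminate; try tauto; try (exfalso; lia); split; intros; congruence.
Qed.

Definition factor (u w : list nat) := exists A B, w = A ++ u ++ B.

Lemma cnt3 x w : 3 <= cnt x w ->
  exists i j k, i < j /\ j < k /\ k < length w /\ nth i w 0 = x /\ nth j w 0 = x /\ nth k w 0 = x.
Proof.
  intros H.
  assert (H1 : 0 < cnt x w) by lia. apply cnt_pos in H1. destruct H1 as [i [Hi Hix]].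
  pose proof (cnt_split w i x Hi) as Sp. rewrite Hix in Sp. destruct (Nat.eq_dec x x) as [_|]; [|congruence].
  destruct (Nat.eq_dec (cnt x (firstn i w)) 0) as [F0|F0].
  - assert (H2 : 0 < cnt x (skipn (S i) w)) by lia.
    apply pos_skipn in H2. destruct H2 as [j [Hj1 [Hj2 Hj3]]].
    pose proof (cnt_split w j x Hj2) as S2. rewrite Hj3 in S2.
    destruct (Nat.eq_dec x x) as [_|]; [|congruence].
    assert (Hf : 0 < cnt x (firstn j w) -> exists a, a < j /\ nth a w 0 = x) by (apply pos_firstn; lia).
    destruct (Nat.eq_dec (cnt x (skipn (S j) w)) 0) as [G0|G0].
    +
      assert (Hcnt2 : 2 <= cnt x (firstn j w)) by lia.
      assert (Hs : cnt x (firstn j w) = cnt x (firstn i w) + 1 + cnt x (skipn (S i) (firstn j w))).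
      { rewrite (cnt_split (firstn j w) i x) by (rewrite length_firstn; lia).
        rewrite nth_firstn. destruct (Nat.ltb_spec i j); [|lia]. rewrite Hix.
        destruct (Nat.eq_dec x x) as [_|]; [|congruence]. rewrite firstn_firstn.
        replace (Nat.min i j) with i by lia. lia. }
      assert (H3 : 0 < cnt x (skipn (S i) (firstn j w))) by lia.
      apply pos_skipn in H3. destruct H3 as [k [Hk1 [Hk2 Hk3]]].
      rewrite length_firstn in Hk2. rewrite nth_firstn in Hk3.
      destruct (Nat.ltb_spec k j); [|lia].
      exists i, k, j. repeat split; auto; lia.
    + assert (H3 : 0 < cnt x (skipn (S j) w)) by lia.
      apply pos_skipn in H3. destruct H3 as [k [Hk1 [Hk2 Hk3]]].
      exists i, j, k. repeat split; auto; lia.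
  - assert (H2 : 0 < cnt x (firstn i w)) by lia.
    apply pos_firstn in H2; [|lia]. destruct H2 as [h [Hh1 Hh2]].
    destruct (Nat.eq_dec (cnt x (skipn (S i) w)) 0) as [G0|G0].
    + assert (Hcnt2 : 2 <= cnt x (firstn i w)) by lia.
      pose proof (cnt_split (firstn i w) h x ltac:(rewrite length_firstn; lia)) as S3.
      rewrite nth_firstn in S3. destruct (Nat.ltb_spec h i); [|lia]. rewrite Hh2 in S3.
      destruct (Nat.eq_dec x x) as [_|]; [|congruence].
      destruct (Nat.eq_dec (cnt x (firstn h (firstn i w))) 0) as [K0|K0].
      * assert (H4 : 0 < cnt x (skipn (S h) (firstn i w))) by lia.
        apply pos_skipn in H4. destruct H4 as [k [Hk1 [Hk2 Hk3]]].
        rewrite length_firstn in Hk2. rewrite nth_firstn in Hk3. destruct (Nat.ltb_spec k i); [|lia].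
        exists h, k, i. repeat split; auto; lia.
      * assert (H4 : 0 < cnt x (firstn h (firstn i w))) by lia.
        apply pos_firstn in H4; [|rewrite length_firstn; lia]. destruct H4 as [k [Hk1 Hk2]].
        rewrite nth_firstn in Hk2. destruct (Nat.ltb_spec k i); [|lia].
        exists k, h, i. repeat split; auto; lia.
    + assert (H3 : 0 < cnt x (skipn (S i) w)) by lia.
      apply pos_skipn in H3. destruct H3 as [k [Hk1 [Hk2 Hk3]]].
      exists h, i, k. repeat split; auto; lia.
Qed.

Lemma W_cnt2 m x : cnt x (W m) <= 2.
Proof.
  destruct (Nat.le_gt_cases (cnt x (W m)) 2) as [|H]; [assumption|exfalso].
  destruct (cnt3 x (W m) ltac:(lia)) as [i [j [k [? [? [? [? [? ?]]]]]]]].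
  apply (W_three m i j k); auto; congruence.
Qed.

Lemma nth_fac (A u B : list nat) i : i < length u -> nth i u 0 = nth (length A + i) (A ++ u ++ B) 0.
Proof. intros H. rewrite app_nth2 by lia. rewrite app_nth1 by lia. f_equal. lia. Qed.

Lemma iso_W m u v : factor u (W m) ->
  (forall phi : nat -> Mcal, evalw Mcal phi u = evalw Mcal phi v) -> u = v.
Proof.
  intros [A [B HW]] Hev.
  pose proof (W_length m) as LW.
  assert (Lu : length A + length u <= 4*m+10) by (rewrite <- LW, HW, !length_app; lia).
  assert (Hc2 : forall x, cnt x u <= 2).
  { intros x. pose proof (W_cnt2 m x) as H. rewrite HW in H. unfold cnt in *.
    rewrite !count_occ_app in H. lia. }
  assert (HP1 : P1 u).
  { intros i Hi [k [Hk1 [Hk2 Hk3]]] _ [k' [Hk'1 [Hk'2 Hk'3]]]. exfalso.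
    apply (W_nolatlat m (length A + i) (length A + k) (length A + k')); try lia.
    - rewrite HW, <- !nth_fac by lia. congruence.
    - replace (length A + i + 1) with (length A + (i+1)) by lia.
      rewrite HW, <- !nth_fac by lia. congruence. }
  assert (HP2 : P2 u).
  { intros i Hi [j [Hj1 Hj2]] [j' [Hj'1 Hj'2]].
    apply (W_nosecsec m (length A + i) (length A + j) (length A + j')); try lia.
    - rewrite HW, <- !nth_fac by lia. congruence.
    - replace (length A + i + 1) with (length A + (i+1)) by lia.
      rewrite HW, <- !nth_fac by lia. congruence. }
  destruct (data u v Hev Hc2) as [Hc HR].
  apply iso_comb; auto.
Qed.

Fixpoint prefb (u w : list nat) : bool :=
  match u, w with
  | [], _ => true
  | a :: u', b :: w' => Nat.eqb a b && prefb u' w'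
  | _ :: _, [] => false
  end.
Fixpoint factb (u w : list nat) : bool :=
  prefb u w || match w with [] => false | _ :: w' => factb u w' end.

Lemma prefb_spec u w : prefb u w = true <-> exists B, w = u ++ B.
Proof.
  revert w; induction u as [|a u IH]; intros w; simpl.
  - split; [intros _; exists w; reflexivity|auto].
  - destruct w as [|b w].
    + split; [discriminate|]. intros [B HB]. discriminate.
    + rewrite andb_true_iff, Nat.eqb_eq, IH. split.
      * intros [-> [B ->]]. exists B. reflexivity.
      * intros [B HB]. injection HB as -> HB. split; [reflexivity|]. exists B; auto.
Qed.

Lemma factb_spec u w : factb u w = true <-> factor u w.
Proof.
  induction w as [|b w IH]; simpl.
  - rewrite orb_false_r, prefb_spec. split.
    + intros [B HB]. exists [], B. auto.
    + intros [A [B HB]]. destruct A; [|discriminate]. exists B. auto.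
  - rewrite orb_true_iff, prefb_spec, IH. split.
    + intros [[B HB]|[A [B HB]]].
      * exists [], B. auto.
      * exists (b :: A), B. rewrite HB. reflexivity.
    + intros [A [B HB]]. destruct A as [|c A].
      * left. exists B. auto.
      * right. injection HB as -> HB. exists A, B. auto.
Qed.

Lemma factor_app_l u v w : factor (u ++ v) w -> factor u w.
Proof. intros [A [B ->]]. exists A, (v ++ B). now rewrite <- app_assoc. Qed.
Lemma factor_app_r u v w : factor (u ++ v) w -> factor v w.
Proof. intros [A [B ->]]. exists (A ++ u), B. now rewrite <- !app_assoc. Qed.
Lemma factb_nil w : factb [] w = true.
Proof. apply factb_spec. exists [], w. reflexivity. Qed.

Definition okb (W : list nat) (o : option (list nat)) : bool :=
  match o with Some u => factb u W | None => true end.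
Definition SWc (W : list nat) := { o : option (list nat) | okb W o = true }.
Definition mulo (W : list nat) (a b : option (list nat)) : option (list nat) :=
  match a, b with
  | Some u, Some v => if factb (u ++ v) W then Some (u ++ v) else None
  | _, _ => None
  end.

Lemma mulo_ok W a b : okb W (mulo W a b) = true.
Proof.
  destruct a as [u|], b as [v|]; simpl; auto.
  destruct (factb (u ++ v) W) eqn:E; simpl; auto.
Qed.

Definition SWop (W : list nat) (a b : SWc W) : SWc W :=
  exist _ (mulo W (proj1_sig a) (proj1_sig b)) (mulo_ok W _ _).
Definition SWone (W : list nat) : SWc W := exist _ (Some []) (factb_nil W).

Lemma SW_eq W (a b : SWc W) : proj1_sig a = proj1_sig b -> a = b.
Proof.
  destruct a as [a Ha], b as [b Hb]; simpl. intros ->. f_equal.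
  apply Eqdep_dec.UIP_dec. decide equality.
Qed.

Lemma mulo_assoc W a b c : mulo W a (mulo W b c) = mulo W (mulo W a b) c.
Proof.
  destruct a as [u|], b as [v|], c as [w|]; simpl; auto.
  - destruct (factb (v ++ w) W) eqn:E1; destruct (factb (u ++ v) W) eqn:E2; simpl; auto.
    + rewrite app_assoc. reflexivity.
    + destruct (factb (u ++ v ++ w) W) eqn:E3; auto.
      apply factb_spec in E3. rewrite app_assoc in E3. apply factor_app_l in E3.
      apply factb_spec in E3. congruence.
    + destruct (factb ((u ++ v) ++ w) W) eqn:E3; auto.
      apply factb_spec in E3. rewrite <- app_assoc in E3. apply factor_app_r in E3.
      apply factb_spec in E3. congruence.
  - destruct (factb (u ++ v) W); auto.
Qed.

Lemma SW_assoc W (x y z : SWc W) : SWop W x (SWop W y z) = SWop W (SWop W x y) z.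
Proof. apply SW_eq. simpl. apply mulo_assoc. Qed.
Lemma SW_1l W (x : SWc W) : SWop W (SWone W) x = x.
Proof.
  apply SW_eq. destruct x as [[u|] Hu]; simpl in *; auto. rewrite Hu. reflexivity.
Qed.
Lemma SW_1r W (x : SWc W) : SWop W x (SWone W) = x.
Proof.
  apply SW_eq. destruct x as [[u|] Hu]; simpl in *; auto. rewrite app_nil_r, Hu. reflexivity.
Qed.

Definition SW (W : list nat) : monoid := Monoid (SWc W) (SWop W) (SWone W) (SW_assoc W) (SW_1l W) (SW_1r W).

Definition ocat (ph : nat -> option (list nat)) (u : list nat) : option (list nat) :=
  fold_right (fun x acc => match ph x, acc with Some a, Some b => Some (a ++ b) | _, _ => None end) (Some []) u.

Lemma evalSW W (phi : nat -> SW W) u :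
  proj1_sig (evalw (SW W) phi u) =
  match ocat (fun x => proj1_sig (phi x)) u with
  | Some w => if factb w W then Some w else None | None => None end.
Proof.
  induction u as [|x u IH].
  - simpl. rewrite factb_nil. reflexivity.
  - rewrite evalw_cons. cbn [mop SW SWop proj1_sig]. rewrite IH. simpl ocat.
    destruct (proj1_sig (phi x)) as [a|]; [|reflexivity].
    destruct (ocat (fun x0 => proj1_sig (phi x0)) u) as [b|]; [|reflexivity].
    destruct (factb b W) eqn:Eb; [reflexivity|].
    simpl. destruct (factb (a ++ b) W) eqn:Eab; [|reflexivity].
    apply factb_spec, factor_app_r, factb_spec in Eab. congruence.
Qed.

Definition Ass := nat -> M6.
Definition evM (w : list nat) : Ass -> M6 := fun phi => evalw Mcal phi w.
Definition Bc := { f : Ass -> M6 | exists w, f = evM w }.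

Lemma evM_app u v : evM (u ++ v) = fun phi => m6op (evM u phi) (evM v phi).
Proof. apply functional_extensionality. intros phi. unfold evM. rewrite evalw_app. reflexivity. Qed.

Definition Bop (f g : Bc) : Bc.
Proof.
  refine (exist _ (fun phi => m6op (proj1_sig f phi) (proj1_sig g phi)) _).
  destruct f as [f [u ->]], g as [g [v ->]]. exists (u ++ v). rewrite evM_app. reflexivity.
Defined.
Definition Bone : Bc := exist _ (fun _ => m1) (ex_intro _ [] eq_refl).

Lemma B_eq (f g : Bc) : proj1_sig f = proj1_sig g -> f = g.
Proof. destruct f as [f Hf], g as [g Hg]; simpl. intros ->. f_equal. apply proof_irrelevance. Qed.

Lemma B_assoc (x y z : Bc) : Bop x (Bop y z) = Bop (Bop x y) z.
Proof. apply B_eq. simpl. apply functional_extensionality. intros. apply m6op_assoc. Qed.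
Lemma B_1l (x : Bc) : Bop Bone x = x.
Proof. apply B_eq. simpl. apply functional_extensionality. intros. apply m6op_1l. Qed.
Lemma B_1r (x : Bc) : Bop x Bone = x.
Proof. apply B_eq. simpl. apply functional_extensionality. intros. apply m6op_1r. Qed.

Definition Bmon : monoid := Monoid Bc Bop Bone B_assoc B_1l B_1r.
Definition PA : monoid := prod_monoid Ass (fun _ => Mcal).
Definition emb (f : Bmon) : PA := proj1_sig f.

Lemma emb_hom : is_hom Bmon PA emb.
Proof. split; intros; reflexivity. Qed.
Lemma emb_inj : forall x y : Bmon, emb x = emb y -> x = y.
Proof. intros x y H. apply B_eq. exact H. Qed.

Definition gW (W : list nat) (w : list nat) : SWc W.
Proof.
  refine (exist _ (if factb w W then Some w else None) _).
  destruct (factb w W) eqn:E; simpl; auto.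
Defined.

Definition pickw (f : Bc) : list nat := proj1_sig (constructive_indefinite_description _ (proj2_sig f)).
Lemma pickw_spec f : proj1_sig f = evM (pickw f).
Proof. unfold pickw. destruct (constructive_indefinite_description _ _) as [w Hw]. exact Hw. Qed.

Definition hW (W : list nat) (f : Bmon) : SW W := gW W (pickw f).

Lemma gW_ev m w1 w2 : evM w1 = evM w2 -> gW (W m) w1 = gW (W m) w2.
Proof.
  intros E. assert (E' : forall phi : nat -> Mcal, evalw Mcal phi w1 = evalw Mcal phi w2).
  { intros phi. exact (f_equal (fun f => f phi) E). }
  apply SW_eq. unfold gW. cbn [proj1_sig].
  destruct (factb w1 (W m)) eqn:E1; destruct (factb w2 (W m)) eqn:E2; auto.
  - f_equal. apply (iso_W m); auto. apply factb_spec; auto.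
  - exfalso. assert (w1 = w2) by (apply (iso_W m); auto; apply factb_spec; auto). congruence.
  - exfalso. assert (w2 = w1) by (apply (iso_W m); auto; apply factb_spec; auto). congruence.
Qed.

Lemma gW_mul W w1 w2 : SWop W (gW W w1) (gW W w2) = gW W (w1 ++ w2).
Proof.
  apply SW_eq. simpl.
  destruct (factb w1 W) eqn:E1, (factb w2 W) eqn:E2; simpl; auto;
  destruct (factb (w1 ++ w2) W) eqn:E3; auto; exfalso; apply factb_spec in E3.
  - apply factor_app_r, factb_spec in E3. congruence.
  - apply factor_app_l, factb_spec in E3. congruence.
  - apply factor_app_l, factb_spec in E3. congruence.
Qed.

Lemma factor_len u w : factor u w -> length u <= length w.
Proof. intros [A [B ->]]. rewrite !length_app. lia. Qed.

Lemma SW_in_var m : var_gen Mcal (SW (W m)).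
Proof.
  intros K [HH [HS HP]] HM.
  assert (KA : K PA) by (apply HP; intros; exact HM).
  assert (KB : K Bmon) by exact (HS PA Bmon emb KA emb_hom emb_inj).
  apply (HH Bmon (SW (W m)) (hW (W m)) KB).
  - split.
    + intros x y. unfold hW. cbn [mop SW Bmon].
      rewrite gW_mul. apply gW_ev.
      rewrite <- pickw_spec, evM_app, <- !pickw_spec. reflexivity.
    + unfold hW. transitivity (gW (W m) []).
      * apply gW_ev. rewrite <- pickw_spec. reflexivity.
      * apply SW_eq. reflexivity.
  - intros b. destruct b as [[u|] Hu].
    + exists (exist _ (evM u) (ex_intro _ u eq_refl) : Bc). unfold hW.
      transitivity (gW (W m) u).
      * apply gW_ev. rewrite <- pickw_spec. reflexivity.
      * apply SW_eq. unfold gW. cbn [proj1_sig]. cbn [okb] in Hu. rewrite Hu. reflexivity.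
    + exists (exist _ (evM (0 :: W m)) (ex_intro _ (0 :: W m) eq_refl) : Bc). unfold hW.
      transitivity (gW (W m) (0 :: W m)).
      * apply gW_ev. rewrite <- pickw_spec. reflexivity.
      * apply SW_eq. unfold gW. cbn [proj1_sig]. destruct (factb (0 :: W m) (W m)) eqn:E; auto.
        apply factb_spec, factor_len in E. simpl in E. lia.
Qed.

Definition sat (B : monoid) (u v : list nat) : Prop :=
  forall phi : nat -> B, evalw B phi u = evalw B phi v.

Lemma evalw_hom (A B : monoid) (f : A -> B) psi u : is_hom A B f ->
  evalw B (fun x => f (psi x)) u = f (evalw A psi u).
Proof.
  intros [Hm H1]. induction u as [|a u IH]; [symmetry; exact H1|].
  rewrite !evalw_cons, IH, Hm. reflexivity.
Qed.

Lemma evalw_prod (I : Type) (A : I -> monoid) (phi : nat -> prod_monoid I A) u :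
  evalw (prod_monoid I A) phi u = fun i => evalw (A i) (fun x => phi x i) u.
Proof.
  induction u as [|a u IH]; [reflexivity|].
  rewrite evalw_cons. rewrite IH. reflexivity.
Qed.

Definition VJ (J : nat -> Prop) : mclass :=
  fun B => var_gen Mcal B /\ forall k, J k -> sat B (Uw k) (Vw k).

Lemma VJ_variety J : variety (VJ J).
Proof.
  split; [|split].
  - intros A B f [HvA HsA] Hhom Hsurj. split.
    + intros K HK HM. destruct HK as [HH [HS HP]].
      apply (HH A B f); auto. apply HvA; [split; [|split]|]; auto.
    + intros k Hk phi.
      set (psi := fun x => proj1_sig (constructive_indefinite_description _ (Hsurj (phi x)))).
      assert (Hpsi : forall x, f (psi x) = phi x).
      { intros x. unfold psi. destruct (constructive_indefinite_description _ _). auto. }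
      assert (Hphi : phi = fun x => f (psi x)) by (apply functional_extensionality; intros; auto).
      rewrite Hphi, !evalw_hom by exact Hhom. f_equal. apply HsA. exact Hk.
  - intros A B f [HvA HsA] Hhom Hinj. split.
    + intros K HK HM. destruct HK as [HH [HS HP]].
      apply (HS A B f); auto. apply HvA; [split; [|split]|]; auto.
    + intros k Hk phi. apply Hinj. rewrite <- !evalw_hom by exact Hhom. apply HsA. exact Hk.
  - intros I A HA. split.
    + intros K HK HM. destruct HK as [HH [HS HP]].
      apply HP. intros i. apply (proj1 (HA i)); [split; [|split]|]; auto.
    + intros k Hk phi. rewrite !evalw_prod. apply functional_extensionality_dep. intros i.
      apply (proj2 (HA i)). exact Hk.
Qed.

Lemma VJ_sub J : subvariety_of_var Mcal (VJ J).
Proof. split; [apply VJ_variety|]. intros B [HB _]. exact HB. Qed.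

Lemma ocat_cons ph a u : ocat ph (a :: u) =
  match ph a, ocat ph u with Some x, Some y => Some (x ++ y) | _, _ => None end.
Proof. reflexivity. Qed.

Lemma ocat_none ph u x : In x u -> ph x = None -> ocat ph u = None.
Proof.
  induction u as [|a u IH]; simpl; [tauto|]. intros [->|Hin] Hx.
  - rewrite Hx. reflexivity.
  - rewrite (IH Hin Hx). destruct (ph a); reflexivity.
Qed.

Definition thof (ph : nat -> option (list nat)) : nat -> list nat :=
  fun x => match ph x with Some a => a | None => [] end.

Lemma ocat_some ph u : (forall x, In x u -> ph x <> None) -> ocat ph u = Some (cc (thof ph) u).
Proof.
  induction u as [|a u IH]; intros H; [reflexivity|].
  rewrite ocat_cons, IH by (intros; apply H; simpl; auto). rewrite cc_cons.
  assert (Ht : thof ph a = match ph a with Some x => x | None => [] end) by reflexivity.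
  rewrite Ht. destruct (ph a) eqn:E; [reflexivity|].
  exfalso. apply (H a); simpl; auto.
Qed.

Lemma In_UV k x : In x (Vw k) <-> In x (Uw k).
Proof.
  unfold Vw, Uw. rewrite !in_app_iff. unfold preV, pre8. simpl. tauto.
Qed.

Lemma sat_same m k : k <> m -> sat (SW (W (S m))) (Uw k) (Vw k).
Proof.
  intros Hkm phi. apply SW_eq. rewrite !evalSW.
  set (ph := fun x => proj1_sig (phi x)).
  destruct (classic (exists x, In x (Uw k) /\ ph x = None)) as [[x [Hx Hn]]|Hall].
  - rewrite (ocat_none ph (Uw k) x Hx Hn).
    rewrite (ocat_none ph (Vw k) x (proj2 (In_UV k x) Hx) Hn). reflexivity.
  - assert (HU : forall x, In x (Uw k) -> ph x <> None) by (intros x Hx Hn; apply Hall; eauto).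
    assert (HV : forall x, In x (Vw k) -> ph x <> None) by (intros x Hx; apply HU, In_UV, Hx).
    rewrite (ocat_some ph _ HU), (ocat_some ph _ HV).
    set (th := thof ph).
    destruct (classic (th (y 2) = [] \/ th (q 3) = [])) as [Hz|Hnz].
    + rewrite (UV_swap th k Hz). reflexivity.
    + assert (N2 : th (y 2) <> []) by tauto. assert (N3 : th (q 3) <> []) by tauto.
      destruct (factb (cc th (Uw k)) (W (S m))) eqn:E1.
      * exfalso. apply factb_spec in E1. destruct E1 as [A [B HW]].
        rewrite Uw_W in HW. pose proof (rigidU (S k) (S m) A B th ltac:(lia) ltac:(lia) HW N2 N3). lia.
      * destruct (factb (cc th (Vw k)) (W (S m))) eqn:E2; [|reflexivity].
        exfalso. apply factb_spec in E2. destruct E2 as [A [B HW]].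
        exact (rigidV k (S m) A B th HW N2 N3).
Qed.

Lemma factor_same_len u w : factor u w -> length u = length w -> u = w.
Proof.
  intros [A [B ->]] Hl. rewrite !length_app in Hl.
  destruct A; [|simpl in Hl; lia]. destruct B; [|simpl in Hl; lia].
  simpl. rewrite app_nil_r. reflexivity.
Qed.

Lemma ocat_single ph u : (forall x, In x u -> ph x = Some [x]) -> ocat ph u = Some u.
Proof.
  induction u as [|a u IH]; intros H; [reflexivity|].
  rewrite ocat_cons, IH by (intros; apply H; simpl; auto). rewrite (H a) by (simpl; auto). reflexivity.
Qed.

Lemma sat_diff m : ~ sat (SW (W (S m))) (Uw m) (Vw m).
Proof.
  intros Hs.
  specialize (Hs (fun x => gW (W (S m)) [x])).
  apply (f_equal (@proj1_sig _ _)) in Hs. rewrite !evalSW in Hs. cbv beta in Hs.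
  assert (Hph : forall x, In x (Uw m) -> proj1_sig (gW (W (S m)) [x]) = Some [x]).
  { intros x Hx. unfold gW. cbn [proj1_sig].
    replace (factb [x] (W (S m))) with true; [reflexivity|]. symmetry. apply factb_spec.
    rewrite Uw_W in Hx. apply in_split in Hx. destruct Hx as [l1 [l2 E]].
    exists l1, l2. exact E. }
  rewrite (ocat_single _ (Uw m) Hph) in Hs.
  rewrite (ocat_single _ (Vw m) (fun x Hx => Hph x (proj1 (In_UV m x) Hx))) in Hs.
  rewrite Uw_W in Hs.
  replace (factb (W (S m)) (W (S m))) with true in Hs
    by (symmetry; apply factb_spec; exists [], []; rewrite app_nil_r; reflexivity).
  destruct (factb (Vw m) (W (S m))) eqn:E; [|discriminate].
  apply factb_spec in E. apply factor_same_len in E.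
  - rewrite <- Uw_W in E. apply (f_equal (fun l => nth 5 l 0)) in E. discriminate E.
  - rewrite <- Uw_W. unfold Vw, Uw. rewrite !length_app. reflexivity.
Qed.

Theorem corollary1 : type_continuum Mcal.
Proof.
  intros [f Hf].
  set (g := fun J : nat -> Prop => f (VJ J)).
  assert (key : forall J J', g J = g J' -> forall k, J k -> J' k).
  { intros J J' E k Hk. destruct (classic (J' k)) as [|HnJ']; [assumption|exfalso].
    pose proof (Hf (VJ J) (VJ J') (VJ_sub J) (VJ_sub J') E) as Hsc.
    assert (Hin' : VJ J' (SW (W (S k)))).
    { split; [apply SW_in_var|]. intros k' Hk'. apply sat_same. intros ->. contradiction. }
    apply (proj2 (Hsc _)) in Hin'. destruct Hin' as [_ Hs]. apply (sat_diff k). apply Hs. exact Hk. }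
  set (D := fun n => exists J, g J = n /\ ~ J n).
  destruct (classic (D (g D))) as [HD|HD].
  - pose proof HD as HD'. destruct HD as [J [E HJ]]. apply HJ.
    apply (key D J (eq_sym E)). exact HD'.
  - apply HD. exists D. split; auto.
Qed.
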